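(* Let $\{a,b\}$ be a $2$-element generating set of a finite abelian group $G$ such that $\mathrm{Cay}(G;a,b)$ does not have a hamiltonian cycle, $|G|$ is even, and $|G:\langle a-b\rangle|$ is odd. If $P$ and $P'$ are two arc-disjoint hamiltonian paths in $\mathrm{Cay}(G;a,b)$, with initial vertices $\iota$ and $\iota'$ and terminal vertices $\tau$ and $\tau'$ respectively, then $\iota'+\tau'=\iota+\tau$.
   Context: The Cayley digraph $\mathrm{Cay}(G;a,b)$ has vertex set $G$ and an arc from $v$ to $v+s$ for all $v\in G$, $s\in\{a,b\}$. A hamiltonian path (resp. cycle) is a directed path (resp. directed cycle) visiting every vertex exactly once; the initial and terminal vertices of a path are its first and last vertices. Arc-disjoint means sharing no arc. *)

(* Defs.v *)
From mathcomp Require Import all_boot all_order all_algebra all_fingroup.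
Set Implicit Arguments. Unset Strict Implicit. Unset Printing Implicit Defensive.
Import GRing.Theory.
Local Open Scope ring_scope.

(* Finite abelian groups are represented as finZmodType (additive notation);
   such types carry a canonical finGroupType structure (with * = +). *)

Definition cay_arc (G : finZmodType) (a b : G) : rel G :=
  fun v w => (w == v + a) || (w == v + b).

Definition ham_path (G : finZmodType) (a b : G) (x : G) (s : seq G) : bool :=
  [&& path (cay_arc a b) x s, uniq (x :: s) & size (x :: s) == #|G|].

Definition ham_cycle (G : finZmodType) (a b : G) (c : seq G) : bool :=
  [&& path.cycle (cay_arc a b) c, uniq c & size c == #|G|].

(* The arcs traversed by the path x :: s, as (tail, head) pairs. Since a != b
   in our setting, an arc of Cay(G;a,b) is determined by its endpoints. *)
Definition path_arcs (G : finZmodType) (x : G) (s : seq G) : seq (G * G) :=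
  zip (x :: s) s.

Definition arc_disjoint (G : finZmodType) (x : G) (s : seq G) (x' : G) (s' : seq G) : bool :=
  all (fun e => e \notin path_arcs x' s') (path_arcs x s).

(* Main.v *)
Require Import Defs.
From mathcomp Require Import all_boot all_order all_algebra all_fingroup all_solvable.
From mathcomp Require Import zify.
Set Implicit Arguments. Unset Strict Implicit. Unset Printing Implicit Defensive.
Import GRing.Theory.

Lemma mem_zip_nth (T : eqType) (x0 : T) (l1 l2 : seq T) k :
  k < size l1 -> k < size l2 -> (nth x0 l1 k, nth x0 l2 k) \in zip l1 l2.
Proof.
elim: l1 l2 k => [|x l1 IH] [|y l2] [|k] //=; rewrite ?inE ?eqxx //.
by move=> h1 h2; rewrite IH ?orbT.
Qed.




Lemma ham_all (G : finZmodType) (a b : G) i s : ham_path a b i s -> forall x, x \in i :: s.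
Proof.
case/and3P => _ U /eqP S x.
have E : #|[mem i :: s]| = #|G| by rewrite (card_uniqP U) S.
have := subset_cardP E (subset_predT _).
by move=> /(_ x); rewrite inE.
Qed.

Lemma ham_next (G : finZmodType) (a b : G) i s x : ham_path a b i s -> x != last i s ->
  cay_arc a b x (next (i :: s) x) /\ (x, next (i :: s) x) \in path_arcs i s.
Proof.
move=> hp xl; have xin := ham_all hp x.
case/and3P: hp => P U _.
set k := index x (i :: s).
have kl : k < size (i :: s) by rewrite index_mem.
have ks : k < size s.
  have kl' : k <= size s := kl.
  rewrite ltn_neqAle kl' andbT; apply: contra xl => /eqP ek.
  have := nth_index i xin; rewrite -/k ek => <-.
  by rewrite -[size s]/((size (i :: s)).-1) nth_last.
have nx : next (i :: s) x = nth i s k by rewrite next_nth xin.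
have ex : x = nth i (i :: s) k by rewrite nth_index.
rewrite nx; split.
  by rewrite {1}ex; apply: (pathP i P).
by rewrite {1}ex; apply: mem_zip_nth.
Qed.

Lemma ham_close (G : finZmodType) (a b : G) i s : ham_path a b i s -> cay_arc a b (last i s) i ->
  ham_cycle a b (i :: s).
Proof.
case/and3P => P U S h; apply/and3P; split => //.
by rewrite /= rcons_path P h.
Qed.

Lemma ham_perm (G : finZmodType) (a b : G) i s : ham_path a b i s ->
  exists al : {perm G}, [/\ al (last i s) = i,
     forall v, v != last i s -> cay_arc a b v (al v) /\ (v, al v) \in path_arcs i s
   & ~~ odd #|G| -> odd_perm al].
Proof.
move=> hp; have U : uniq (i :: s) by case/and3P: hp.
exists (perm (can_inj (prev_next U))); split.
- rewrite permE next_nth mem_last; have := index_last U; rewrite /= => ->; exact: nth_default.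
- by move=> v hv; rewrite permE; apply: ham_next.
- move=> ev; rewrite /odd_perm (negPf ev) /=.
  set al := perm _.
  have P1 : forall x y, y \in porbit al x.
    move=> x y; apply/porbitP.
    have fc : fconnect (next (i :: s)) x y.
      by rewrite (fconnect_cycle (cycle_next U) (ham_all hp x)) (ham_all hp).
    exists (findex (next (i :: s)) x y); rewrite permX -{1}(iter_findex fc).
    by apply: eq_iter => z; rewrite permE.
  have -> : porbits al = [set [set: G]].
    apply/setP => A; rewrite inE; apply/imsetP/eqP => [[x _ ->]|->].
      by apply/setP => y; rewrite inE P1.
    by exists i => //; apply/setP => y; rewrite inE P1.
  by rewrite cards1.
Qed.

Local Open Scope ring_scope.

Lemma addIr_eq (G : zmodType) (x y c : G) : (x + c == y + c) = (x == y).
Proof. exact: (inj_eq (addIr c)). Qed.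

Lemma shift_ab (G : zmodType) (z v a b : G) : (z + a == v + b) = (z == v - (a - b)).
Proof. by rewrite -(addIr_eq _ _ a) opprB addrA subrK. Qed.

Lemma shift_ba (G : zmodType) (z v a b : G) : (z + b == v + a) = (z == v + (a - b)).
Proof. by rewrite -(addIr_eq _ _ b) -addrA subrK. Qed.

Lemma pigeon (G : zmodType) (w a b u1 u2 u3 : G) :
  (u1 = w - a \/ u1 = w - b) -> (u2 = w - a \/ u2 = w - b) ->
  (u3 = w - a \/ u3 = w - b) -> u1 != u2 -> u1 != u3 -> u2 != u3 -> False.
Proof.
by case=> ->; case=> ->; case=> ->; rewrite ?eqxx.
Qed.

Record setup (G : finZmodType) (a b : G) (al al' : {perm G}) (i t i' t' : G) : Prop :=
  Setup {
  s_ab : a != b;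
  s_t : al t = i; s_t' : al' t' = i';
  s_arc : forall v, v != t -> al v = v + a \/ al v = v + b;
  s_arc' : forall v, v != t' -> al' v = v + a \/ al' v = v + b;
  s_dis : forall v, v != t -> v != t' -> al v != al' v;
  s_nc1 : i != t + a; s_nc2 : i != t + b;
  s_nc1' : i' != t' + a; s_nc2' : i' != t' + b }.

Lemma setup_sym (G : finZmodType) (a b : G) al al' i t i' t' :
  setup a b al al' i t i' t' -> setup a b al' al i' t' i t.
Proof.
case=> *; split => // v h1 h2; rewrite eq_sym; auto.
Qed.

Lemma arc_pre (G : zmodType) (a b z w : G) : w = z + a \/ w = z + b ->
  z = w - a \/ z = w - b.
Proof. by case=> ->; rewrite addrK; auto. Qed.

Lemma setup_tt' (G : finZmodType) (a b : G) al al' i t i' t' :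
  setup a b al al' i t i' t' -> t != t'.
Proof.
move=> S; apply/negP => /eqP et.
set w := t + a.
set z := al^-1%g w; set y := al'^-1%g w.
have az : al z = w by rewrite permKV.
have ay : al' y = w by rewrite permKV.
have zt : z != t.
  apply/negP => /eqP e; move: (s_nc1 S); rewrite -(s_t S) -{1}e az /w eqxx //.
have yt : y != t'.
  apply/negP => /eqP e; move: (s_nc1' S); rewrite -(s_t' S) -{1}e ay /w et eqxx //.
have zy : z != y.
  apply/negP => /eqP e; have zt' : z != t' by rewrite e.
  by have := s_dis S zt zt'; rewrite az e ay eqxx.
apply: (@pigeon _ w a b t z y).
- by rewrite addrK; left.
- by apply: arc_pre; rewrite -az; exact: (s_arc S zt).
- by apply: arc_pre; rewrite -ay; exact: (s_arc' S yt).
- by rewrite eq_sym.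
- by rewrite et eq_sym.
- exact: zy.
Qed.

Lemma setup_unused (G : finZmodType) (a b : G) al al' i t i' t' x :
  setup a b al al' i t i' t' -> (x = a \/ x = b) -> al' t != t + x -> i' = t + x.
Proof.
move=> S hx hne; have tt' := setup_tt' S.
apply/eqP; apply: contraT => ne.
set w := t + x.
set z := al^-1%g w; set y := al'^-1%g w.
have az : al z = w by rewrite permKV.
have ay : al' y = w by rewrite permKV.
have zt : z != t.
  apply/negP => /eqP e; move: az; rewrite e (s_t S) /w => e2.
  by case: hx => ex; [move: (s_nc1 S) | move: (s_nc2 S)]; rewrite -ex e2 eqxx.
have yt' : y != t'.
  by apply/negP => /eqP e; move: ne; rewrite -/w -ay e (s_t' S) eqxx.
have yt : y != t.
  by apply/negP => /eqP e; move: hne; rewrite -/w -ay e eqxx.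
have zy : z != y.
  apply/negP => /eqP e; have zt' : z != t' by rewrite e.
  by have := s_dis S zt zt'; rewrite az e ay eqxx.
exfalso; apply: (@pigeon _ w a b t z y).
- by case: hx => ex; rewrite /w ex addrK; auto.
- by apply: arc_pre; rewrite -az; exact: (s_arc S zt).
- by apply: arc_pre; rewrite -ay; exact: (s_arc' S yt').
- by rewrite eq_sym.
- by rewrite eq_sym.
- exact: zy.
Qed.


Lemma addrx_eq (G : zmodType) (x y : G) : (x + y == x) = (y == 0).
Proof. by rewrite -{2}[x]addr0 (inj_eq (addrI x)). Qed.

Lemma subrx_eq (G : zmodType) (x y : G) : (x - y == x) = (y == 0).
Proof. by rewrite addrx_eq oppr_eq0. Qed.

Lemma shift_ab2 (G : zmodType) (z v a b : G) : (z + a == v + b) = (z + (a - b) == v).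
Proof. by rewrite -[RHS](addIr_eq _ _ b) -addrA subrK. Qed.

Lemma memC (G : finZmodType) (d x y : G) :
  (y \in (<[d]> :* x)%g) <-> exists k, y = x + d *+ k.
Proof.
rewrite mem_rcoset; split.
  case/cycleP => k e; exists k; change (y - x = d *+ k) in e.
  by rewrite -e addrC subrK.
case=> k e; apply/cycleP; exists k; change (y - x = d *+ k).
by rewrite e addrC addKr.
Qed.

Lemma Dnz (G : finZmodType) (d : G) k : (0 < k < #[d]%g)%N -> d *+ k != 0.
Proof.
case/andP=> k0 kh; apply/negP => /eqP e.
have : (#[d]%g %| k)%N by rewrite order_dvdn; apply/eqP; exact: e.
by move/dvdn_leq => /(_ k0); rewrite leqNgt kh.
Qed.

Lemma Dh (G : finZmodType) (d : G) : d *+ #[d]%g = 0.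
Proof. exact: expg_order. Qed.

Lemma Dmod (G : finZmodType) (d : G) k : d *+ (k %% #[d]%g) = d *+ k.
Proof. exact: expg_mod_order. Qed.

Lemma Dneg (G : finZmodType) (d : G) m : d *+ m + d *+ (m * (#[d]%g).-1) = 0.
Proof.
rewrite -mulrnDr.
have -> : (m + m * (#[d]%g).-1 = #[d]%g * m)%N.
  have := order_gt0 d; case: #[d]%g => // n _ /=; lia.
by rewrite mulrnA Dh mul0rn.
Qed.

Lemma perm_step (G : finType) (s : {perm G}) x y :
  y \in porbit s x -> s y \in porbit s x.
Proof.
by case/porbitP => n ->; apply/porbitP; exists n.+1; rewrite !permX.
Qed.

Lemma DnegE (G : finZmodType) (d : G) m : d *+ (m * (#[d]%g).-1) = - (d *+ m).
Proof. by rewrite (addr0_eq (Dneg d m)). Qed.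

Lemma Dm1 (G : finZmodType) (d : G) : d *+ (#[d]%g).-1 = - d.
Proof. by have := DnegE d 1; rewrite mul1n mulr1n. Qed.


Lemma nat_sum (q0 q1 h c : nat) : (q0 < h)%N -> (q1.+1 < h)%N ->
  (q0 + q1.+2 = c * h)%N -> (q0 + q1.+2 = h)%N.
Proof. by case: c => [|[|c]]; rewrite ?mulSn ?mul0n; lia. Qed.

Lemma nat_A (q0 q1 k h : nat) : (q0 + q1.+2 = h)%N -> (q1 < k)%N -> (h <= k.+1 + q0)%N.
Proof. lia. Qed.

Lemma setup_B3 (G : finZmodType) (a b : G) al al' i t i' t' :
  setup a b al al' i t i' t' -> i' = t + a -> i = t' + b ->
  ~~ odd #|G| -> odd #|[set: G] : <[a - b]>|%g -> odd_perm al -> odd_perm al' -> False.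
Proof.
move=> S ei' ei ev oi oal oal'.
have tt' := setup_tt' S.
have ab := s_ab S.
have [d ed] : exists d : G, d = a - b by exists (a - b).
rewrite -ed in oi.
have d0 : d != 0 by rewrite ed subr_eq0.
have ii' : i != i' by rewrite ei'; exact: s_nc1 S.
have f2 : t + d != t'.
  apply/negP => /eqP e; move/negP: ii'; apply; rewrite ei ei' -e ed.
  by rewrite -addrA subrK.
set tf := fun v => (v == t') || (al' v == v + b).
have al't : al' t = t + b.
  case: (s_arc' S tt') => // e; exfalso.
  have : al' t = al' t' by rewrite e (s_t' S) ei'.
  by move/perm_inj => e2; rewrite e2 eqxx in tt'.
have tf_t : tf t by rewrite /tf /= al't eqxx orbT.
have tf_td : tf (t + d) = false.
  rewrite /tf /= (negPf f2) /=; apply/negP => /eqP e.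
  have : al' (t + d) = al' t' by rewrite e (s_t' S) ei' ed -addrA subrK.
  by move/perm_inj => e2; rewrite e2 eqxx in f2.
have al'_tpd : al' (t' - d) = i.
  set y := (al'^-1)%g i.
  have ay : al' y = i by rewrite permKV.
  have yt' : y != t'.
    by apply/negP => /eqP e; move: ii'; rewrite -ay e (s_t' S) eqxx.
  case: (s_arc' S yt') => e.
    have : y + a == t' + b by rewrite -e ay ei.
    by rewrite shift_ab -ed => /eqP <-.
  have : y + b == t' + b by rewrite -e ay ei.
  by rewrite addIr_eq (negPf yt').
have tf_tpd : tf (t' - d) = false.
  rewrite /tf /= subrx_eq (negPf d0) /= al'_tpd ei.
  by rewrite addIr_eq eq_sym subrx_eq (negPf d0).
have Tl : forall v, v != t -> v + d != t' -> tf (v + d) = tf v.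
  move=> v vt vd; have [vt'|vt'] := eqVneq v t'.
    rewrite vt' /tf /= eqxx /=.
    set y := (al'^-1)%g (t' + a).
    have ay : al' y = t' + a by rewrite permKV.
    have yt' : y != t'.
      by apply/negP => /eqP e; move: (s_nc1' S); rewrite -ay e (s_t' S) eqxx.
    case: (s_arc' S yt') => e.
      by move: yt'; rewrite -(inj_eq (addIr a)) -e ay eqxx.
    have : y + b == t' + a by rewrite -e ay.
    rewrite shift_ba -ed => /eqP ey; by rewrite -ey ay ey ed -addrA subrK eqxx orbT.
  set w := v + a.
  set y := (al'^-1)%g w.
  have ay : al' y = w by rewrite permKV.
  have yt' : y != t'.
    apply/negP => /eqP e; move: ay; rewrite e (s_t' S) ei' /w => /eqP.
    by rewrite addIr_eq eq_sym (negPf vt).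
  rewrite /tf /= (negPf vt') (negPf vd) /=.
  case: (s_arc' S yt') => e.
    have yv : y = v by apply/eqP; rewrite -(addIr_eq _ _ a) -e ay.
    rewrite -yv e (inj_eq (addrI y)) (negPf ab).
    apply/negP => /eqP e2.
    have : al' (y + d) = al' y by rewrite e2 e ed -addrA subrK.
    by move/perm_inj/eqP; rewrite addrx_eq (negPf d0).
  have : y + b == v + a by rewrite -e ay.
  rewrite shift_ba -ed => /eqP yv.
  have -> : al' (v + d) = v + d + b by rewrite -yv e.
  rewrite eqxx; symmetry.
  case: (s_arc' S vt') => e2; last by rewrite e2 eqxx.
  exfalso; have : al' v = al' y by rewrite e2 ay.
  by move/perm_inj/eqP; rewrite yv eq_sym addrx_eq (negPf d0).
set th := (al' * al^-1)%g.
have thE : forall v, al (th v) = al' v by move=> v; rewrite permM permKV.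
have thF : forall v, v != t' -> v + d != t' -> th v = if tf v then v - d else v + d.
  move=> v vt' vd; set z := th v; have az : al z = al' v := thE v.
  have hv : al' v != i.
    case: (s_arc' S vt') => ->; rewrite ei.
      by rewrite shift_ab2 -ed.
    by rewrite addIr_eq.
  have zt : z != t by apply/negP => /eqP e; move: hv; rewrite -az e (s_t S) eqxx.
  have zv : z != v.
    apply/negP => /eqP e; have vt : v != t by rewrite -e.
    by have := s_dis S vt vt'; rewrite -{1}e az eqxx.
  rewrite /tf /= (negPf vt') /=.
  case: (s_arc' S vt') => e; rewrite e.
    rewrite (inj_eq (addrI v)) (negPf ab).
    case: (s_arc S zt) => e2.
      by move: zv; rewrite -(inj_eq (addIr a)) -e2 az e eqxx.
    by apply/eqP; rewrite ed -shift_ba -e2 az e.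
  rewrite eqxx.
  case: (s_arc S zt) => e2.
    by apply/eqP; rewrite ed -shift_ab -e2 az e.
  by move: zv; rewrite -(inj_eq (addIr b)) -e2 az e eqxx.
have thT' : th t' = t + d.
  set z := th t'; have az : al z = al' t' := thE t'.
  have zt : z != t by apply/negP => /eqP e; move: ii'; rewrite -(s_t S) -e az (s_t' S) eqxx.
  case: (s_arc S zt) => e2.
    by move: zt; rewrite -(inj_eq (addIr a)) -e2 az (s_t' S) ei' eqxx.
  by apply/eqP; rewrite ed -shift_ba -e2 az (s_t' S) ei'.
have thTpd : th (t' - d) = t.
  by apply: (@perm_inj _ al); rewrite thE al'_tpd (s_t S).
set h := #[d]%g.
have h0 : (0 < h)%N := order_gt0 d.
have [j [jh ej]] : exists j, (j < h)%N /\ t' = t + d *+ j.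
  case: (boolP [exists j : 'I_h, t' == t + d *+ j]) => [/existsP [j /eqP ej]|nj].
    by exists j; split.
  exfalso; move/existsPn: nj => nj.
  have nk : forall k, t' != t + d *+ k.
    by move=> k; have := nj (Ordinal (ltn_pmod k h0)); rewrite /= Dmod.
  have ind : forall k, tf (t + d *+ k.+1) = false.
    elim=> [|k IH]; first by rewrite mulr1n.
    have e : t + d *+ k.+2 = t + d *+ k.+1 + d by rewrite mulrSr addrA.
    rewrite e Tl //.
      by apply/negP => /eqP E; move: IH; rewrite E tf_t.
    by rewrite -e eq_sym nk.
  by have := ind h.-1; rewrite prednK // Dh addr0 tf_t.
have j0 : j != 0%N by apply: contraNneq tt' => e; rewrite ej e mulr0n addr0.
have j1 : j != 1%N by apply: contraNneq f2 => e; rewrite ej e mulr1n.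
set Sx := porbit th t.
have A' : forall q, (forall r, (r < q)%N -> t - d *+ r != t') ->
    t - d *+ q \in Sx /\ tf (t - d *+ q).
  elim=> [|q IH] H.
    by rewrite mulr0n subr0 porbit_id tf_t.
  have [vS tv] : t - d *+ q \in Sx /\ tf (t - d *+ q).
    by apply: IH => r hr; apply: H; rewrite ltnS ltnW.
  have vt' : t - d *+ q != t' by apply: H.
  have vd : t - d *+ q + d != t'.
    case: q {IH vS tv vt'} H => [|q] H.
      by rewrite mulr0n subr0.
    by rewrite mulrSr opprD addrA subrK; apply: H; rewrite ltnS leqnSn.
  have e : th (t - d *+ q) = t - d *+ q.+1 by rewrite thF // tv mulrSr opprD addrA.
  split; first by rewrite -e; apply: perm_step.
  have ew : t - d *+ q.+1 + d = t - d *+ q by rewrite mulrSr opprD addrA subrK.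
  have [wt|wt] := eqVneq (t - d *+ q.+1) t; first by rewrite wt.
  by rewrite -(Tl _ wt) ew.
have ex0 : exists q, t - d *+ q == t'.
  by exists (j * h.-1)%N; rewrite DnegE opprK ej.
case: (ex_minnP ex0) => q0 /eqP Pq0 min0.
have hq0 : forall r, (r < q0)%N -> t - d *+ r != t'.
  by move=> r hr; apply/negP => Pr; have := min0 r Pr; rewrite leqNgt hr.
have t'S : t' \in Sx by have [+ _] := A' q0 hq0; rewrite Pq0.
have B' : forall q, (forall r, (r < q)%N -> t + d *+ r.+1 != t' - d) ->
    t + d *+ q.+1 \in Sx /\ tf (t + d *+ q.+1) = false.
  elim=> [|q IH] H.
    by rewrite mulr1n tf_td -thT'; split => //; apply: perm_step.
  have [vS tv] : t + d *+ q.+1 \in Sx /\ tf (t + d *+ q.+1) = false.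
    by apply: IH => r hr; apply: H; rewrite ltnS ltnW.
  have vtd : t + d *+ q.+1 != t' - d by apply: H.
  have vt' : t + d *+ q.+1 != t'.
    by apply/negP => /eqP E; move: tv; rewrite E /tf /= eqxx.
  have vd : t + d *+ q.+1 + d != t'.
    by apply: contra vtd => /eqP <-; rewrite addrK.
  have vt : t + d *+ q.+1 != t.
    by apply/negP => /eqP E; move: tv; rewrite E tf_t.
  have e : th (t + d *+ q.+1) = t + d *+ q.+2 by rewrite (thF _ vt' vd) tv -addrA -mulrSr.
  split; first by rewrite -e; apply: perm_step.
  by rewrite (mulrSr _ q.+1) addrA Tl.
have ex1 : exists q, t + d *+ q.+1 == t' - d.
  exists j.-2; rewrite ej.
  have -> : j = (j.-2).+2 by case: j j0 j1 {jh ej} => [|[|j]].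
  by rewrite (mulrSr d j.-2.+1) addrA addrK.
case: (ex_minnP ex1) => q1 /eqP Pq1 min1.
have hq1 : forall r, (r < q1)%N -> t + d *+ r.+1 != t' - d.
  by move=> r hr; apply/negP => Pr; have := min1 r Pr; rewrite leqNgt hr.
have q0h : (q0 < h)%N.
  have := min0 (q0 %% h)%N; rewrite Dmod Pq0 eqxx => /(_ isT) le.
  exact: leq_ltn_trans le (ltn_pmod _ h0).
have q1h : (q1.+1 < h)%N.
  have := Dmod d q1.+1; rewrite -/h; case E: (q1.+1 %% h)%N => [|r] e.
    exfalso; move: Pq1; rewrite -e mulr0n addr0 => e2.
    by move/negP: f2; apply; rewrite e2 subrK.
  have := min1 r; rewrite e Pq1 eqxx => /(_ isT) le.
  have := ltn_pmod q1.+1 h0; rewrite E => rh; apply: leq_ltn_trans rh; by rewrite ltnS.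
have sumq : (q0 + q1.+2 = h)%N.
  have e1 : t + d *+ q1.+2 = t' by rewrite mulrSr addrA Pq1 subrK.
  have e2 : d *+ (q0 + q1.+2) = 0.
    apply/eqP; rewrite mulrnDr addrC addr_eq0; apply/eqP.
    by apply: (@addrI _ t); rewrite e1 Pq0.
  have : (h %| q0 + q1.+2)%N by rewrite order_dvdn; apply/eqP; exact: e2.
  by case/dvdnP => c ec; apply: (nat_sum q0h q1h ec).
have CS : forall k, t + d *+ k \in Sx.
  move=> k; rewrite -Dmod; have := ltn_pmod k h0; set k' := (k %% h)%N => kh.
  case: k' kh => [|k'] kh; first by rewrite mulr0n addr0 porbit_id.
  case: (leqP k' q1) => hk.
    have hB : forall r, (r < k')%N -> t + d *+ r.+1 != t' - d.
      by move=> r hr; apply: hq1; exact: leq_trans hr hk.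
    by case: (B' k' hB).
  have E : t + d *+ k'.+1 = t - d *+ (h - k'.+1)%N.
    apply/eqP; rewrite (inj_eq (addrI t)) -addr_eq0 -mulrnDr.
    by rewrite subnKC ?Dh // ltnW.
  have hA : forall r, (r < h - k'.+1)%N -> t - d *+ r != t'.
    move=> r hr; apply: hq0; apply: leq_trans hr _; rewrite leq_subLR.
    exact: nat_A sumq hk.
  by rewrite E; case: (A' _ hA).
have tej : t = t' + d *+ (j * h.-1)%N by rewrite ej -addrA Dneg addr0.
have stepH : forall v, exists k, th v = v + d *+ k.
  move=> v; have [vt'|vt'] := eqVneq v t'.
    by exists (j * h.-1).+1%N; rewrite vt' thT' mulrSr addrA -tej.
  have [vd|vd] := eqVneq (v + d) t'.
    exists (j * h.-1).+1%N; rewrite mulrS addrA vd -tej.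
    by have -> : v = t' - d by rewrite -vd addrK.
  rewrite thF //; case: (tf v).
    by exists h.-1; rewrite Dm1.
  by exists 1%N; rewrite mulr1n.
have PE : forall x, porbit th x = (<[d]> :* x)%g.
  move=> x; apply/setP => y; apply/idP/idP.
    case/porbitP => n ->; apply/memC; rewrite permX.
    elim: n => [|n [k IH]]; first by exists 0%N; rewrite mulr0n addr0.
    have [k2 e2] := stepH (iter n th x).
    by exists (k + k2)%N; rewrite iterS e2 IH mulrnDr addrA.
  case/memC => k ->.
  case: (boolP [exists m : 'I_h, x == t + d *+ m]) => [/existsP [m /eqP em]|nm].
    have xS : x \in Sx by rewrite em CS.
    have -> : porbit th x = Sx by apply/eqP; rewrite eq_porbit_mem.
    by rewrite em -addrA -mulrnDr CS.
  move/existsPn: nm => nm.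
  have nm' : forall m, x != t + d *+ m.
    by move=> m; have := nm (Ordinal (ltn_pmod m h0)); rewrite /= Dmod.
  have hx : forall k m, x + d *+ k != t + d *+ m.
    move=> k1 m; apply: contra (nm' (m + k1 * h.-1)%N) => /eqP E.
    by rewrite mulrnDr addrA -E -addrA Dneg addr0.
  have xt : forall k, x + d *+ k != t by move=> k1; have := hx k1 0%N; rewrite mulr0n addr0.
  have xt' : forall k, x + d *+ k != t' by move=> k1; rewrite ej hx.
  have xd : forall k, x + d *+ k + d != t' by move=> k1; rewrite -addrA -mulrSr xt'.
  have tfc : forall k, tf (x + d *+ k) = tf x.
    elim=> [|k1 IH]; first by rewrite mulr0n addr0.
    by rewrite mulrSr addrA Tl.
  case tfx : (tf x).
    have W : forall m, x + d *+ (m * h.-1) \in porbit th x.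
      elim=> [|m IH]; first by rewrite mul0n mulr0n addr0 porbit_id.
      have e : th (x + d *+ (m * h.-1)) = x + d *+ (m.+1 * h.-1).
        by rewrite (thF _ (xt' _) (xd _)) tfc tfx mulSn mulrnDr Dm1 (addrC (- d)) addrA.
      by rewrite -e; apply: perm_step.
    by have := W (k * h.-1)%N; rewrite DnegE (DnegE d k) opprK.
  have W : forall m, x + d *+ m \in porbit th x.
    elim=> [|m IH]; first by rewrite mulr0n addr0 porbit_id.
    have e : th (x + d *+ m) = x + d *+ m.+1.
      by rewrite (thF _ (xt' _) (xd _)) tfc tfx mulrSr addrA.
    by rewrite -e; apply: perm_step.
  exact: W.
have PC : porbits th = rcosets <[d]>%g [set: G].
  apply/setP => X; apply/imsetP/imsetP => [[x _ ->]|[x _ ->]]; exists x => //.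
    by rewrite rcosetE PE.
  by rewrite rcosetE PE.
have e1 : odd_perm th = false by rewrite /th odd_permM odd_permV oal oal'.
have e2 : odd_perm th = true by rewrite /odd_perm (negPf ev) PC.
by rewrite e1 in e2.
Qed.


Lemma setup_core (G : finZmodType) (a b : G) al al' i t i' t' :
  setup a b al al' i t i' t' ->
  ~~ odd #|G| -> odd #|[set: G] : <[a - b]>|%g -> odd_perm al -> odd_perm al' ->
  i' + t' = i + t.
Proof.
move=> S ev oi oal oal'.
have tt' := setup_tt' S.
have S' := setup_sym S.
have ab := s_ab S.
have ei' : i' = t + a \/ i' = t + b.
  case: (s_arc' S tt') => e.
    right; apply: (setup_unused S); first by right.
    by rewrite e (inj_eq (addrI t)).
  left; apply: (setup_unused S); first by left.
  by rewrite e (inj_eq (addrI t)) eq_sym.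
have ei : i = t' + a \/ i = t' + b.
  have t't : t' != t by rewrite eq_sym.
  case: (s_arc' S' t't) => e.
    right; apply: (setup_unused S'); first by right.
    by rewrite e (inj_eq (addrI t')).
  left; apply: (setup_unused S'); first by left.
  by rewrite e (inj_eq (addrI t')) eq_sym.
case: ei' => ei'; case: ei => ei.
- by rewrite ei' ei addrAC [RHS]addrAC (addrC t).
- by exfalso; apply: (setup_B3 S ei' ei).
- by exfalso; apply: (setup_B3 S' ei ei').
- by rewrite ei' ei addrAC [RHS]addrAC (addrC t).
Qed.

Theorem mainTheorem10 (G : finZmodType) (a b : G) :
  a != b ->
  (<<[set a; b]>>%g = [set: G]) ->
  ~ (exists c : seq G, ham_cycle a b c) ->
  ~~ odd #|G| ->
  odd #|[set: G] : <[(a - b)%R]>|%g ->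
  forall (i : G) (s : seq G) (i' : G) (s' : seq G),
    ham_path a b i s -> ham_path a b i' s' -> arc_disjoint i s i' s' ->
    (i' + last i' s' = i + last i s)%R.
Proof.
move=> ab _ nohc ev oi i s i' s' hp hp' dis.
have [al [alt alarc aodd]] := ham_perm hp.
have [al' [alt' alarc' aodd']] := ham_perm hp'.
have arcP : forall u v, cay_arc a b u v -> v = u + a \/ v = u + b.
  by move=> u v /orP[] /eqP ->; auto.
apply: (@setup_core G a b al al' i (last i s) i' (last i' s')); [|exact: ev|exact: oi|exact: aodd|exact: aodd'].
split => //.
- by move=> v hv; apply: arcP; case: (alarc v hv).
- by move=> v hv; apply: arcP; case: (alarc' v hv).
- move=> v hv hv'; apply/negP => /eqP e.
  have [_ m1] := alarc v hv; have [_ m2] := alarc' v hv'.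
  by move/allP: dis => /(_ _ m1); rewrite e m2.
- by apply/negP => /eqP e; apply: nohc; exists (i :: s); apply: ham_close => //; rewrite /cay_arc; apply/orP; left; apply/eqP.
- by apply/negP => /eqP e; apply: nohc; exists (i :: s); apply: ham_close => //; rewrite /cay_arc; apply/orP; right; apply/eqP.
- by apply/negP => /eqP e; apply: nohc; exists (i' :: s'); apply: ham_close => //; rewrite /cay_arc; apply/orP; left; apply/eqP.
- by apply/negP => /eqP e; apply: nohc; exists (i' :: s'); apply: ham_close => //; rewrite /cay_arc; apply/orP; right; apply/eqP.
Qed.
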